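(* Let $F=\breve F(\alpha_1,\dots,\alpha_t)$ be a fence, let $i\in[t]$ with $\alpha_i\ge2$, let $v$ be the valley of $S_i$ (if it exists) and $p$ the peak of $S_i$ (if it exists). Then for each $j\in[\beta_i]$, as functions on $\mathcal J(F)$, \[ \alpha_i\hat\chi_{(i,j)}-j\hat\chi_p-(\alpha_i-j)\hat\chi_v=\mathbf 1(S_i\text{ has no valley})(\alpha_i-j)-(\alpha_i-j)\!\!\sum_{s_{(i,1)}\trianglelefteq u\trianglelefteq s_{(i,j)}}\!\!\#[s_{(i,1)},u]\,T_u-j\!\!\sum_{s_{(i,j)}\vartriangleleft u\trianglelefteq s_{(i,\beta_i)}}\!\!\#[u,s_{(i,\beta_i)}]\,T_u, \] where $[a,b]$ denotes an interval of $F$ and $\mathbf 1(\cdot)$ is $1$ if the statement holds and $0$ otherwise.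
   Context: Fences: let $\alpha=(\alpha_1,\dots,\alpha_t)$ be positive integers with $t\ge2$ and $\alpha_1,\alpha_t\ge2$. Put $a_0=0$, $a_i=\alpha_1+\dots+\alpha_i$, $n=a_t-1$. The fence $\breve F(\alpha)$ is the poset (order $\trianglelefteq$) on $\{x_1,\dots,x_n\}$ whose cover relations are: for $1\le j\le n-1$ with $a_{i-1}\le j<a_i$, $x_j\lessdot x_{j+1}$ if $i$ is odd and $x_j\gtrdot x_{j+1}$ if $i$ is even. Segments: $S_1=\{x_j:1\le j\le a_1\}$, $S_i=\{x_j:a_{i-1}\le j\le a_i\}$ for $2\le i\le t-1$, $S_t=\{x_j:a_{t-1}\le j\le n\}$ (each a chain). Shared elements $x_{a_i}$, $i\in[t-1]$, are peaks (cover two elements) for $i$ odd and valleys (covered by two elements) for $i$ even; the peak (valley) of $S_i$ is the shared element of $S_i$ that is a peak (valley), if any. $\breve S_i$ is the set of non-shared elements of $S_i$, $\beta_i=\#\breve S_i=\alpha_i-1$, $s_{(i,j)}$ is the $j$-th smallest element of $\breve S_i$. For $q\in F$ and an order ideal $I\in\mathcal J(F)$: $\hat\chi_q(I)=1$ if $q\in I$, else $0$; $T_q(I)=1$ if $q\in\min(F\setminus I)$, $-1$ if $q\in\max(I)$, $0$ otherwise. Write $\hat\chi_{(i,j)}=\hat\chi_{s_{(i,j)}}$. Convention: statistics indexed by nonexistent elements are identically zero. *)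

(* Defs.v *)
(* Fence \breve F(alpha) with alpha given as a seq nat
   (alpha_i = nth 0 alpha (i-1), 1-indexed, t = size alpha).
   The ground set {x_1,...,x_n} is represented by 'I_n, with x_j <-> ordinal (j-1). *)
From mathcomp Require Import all_boot all_order all_algebra.
Import GRing.Theory Num.Theory.

Section Fence.
Variable alpha : seq nat.

Definition ft : nat := size alpha.
Definition alph (i : nat) : nat := nth 0 alpha i.-1.
Definition beta (i : nat) : nat := alph i - 1.
Definition apart (i : nat) : nat := \sum_(1 <= k < i.+1) alph k.
Definition fn : nat := (apart ft).-1.

Definition idx (u : 'I_fn) : nat := (nat_of_ord u).+1.

Definition cov (u v : 'I_fn) : bool :=
  ((idx v == (idx u).+1) &&
     has (fun i => odd i && (apart i.-1 <= idx u < apart i)) (iota 1 ft))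
  || ((idx u == (idx v).+1) &&
     has (fun i => ~~ odd i && (apart i.-1 <= idx v < apart i)) (iota 1 ft)).

Definition fle (u v : 'I_fn) : bool := connect cov u v.
Definition flt (u v : 'I_fn) : bool := (u != v) && fle u v.

Definition seg (i : nat) : {set 'I_fn} :=
  if i == 1 then [set u | idx u <= apart 1]
  else if i == ft then [set u | apart ft.-1 <= idx u <= fn]
  else [set u | apart i.-1 <= idx u <= apart i].

Definition shared : {set 'I_fn} :=
  [set u | has (fun k => idx u == apart k) (iota 1 ft.-1)].

Definition bseg (i : nat) : {set 'I_fn} := seg i :\: shared.

Definition is_peak (u : 'I_fn) : bool := #|[set w | cov w u]| == 2.
Definition is_valley (u : 'I_fn) : bool := #|[set w | cov u w]| == 2.

Definition peakS (i : nat) : option 'I_fn :=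
  [pick u in seg i | (u \in shared) && is_peak u].
Definition valleyS (i : nat) : option 'I_fn :=
  [pick u in seg i | (u \in shared) && is_valley u].

Definition sel (i j : nat) : option 'I_fn :=
  [pick u in bseg i | #|[set w in bseg i | fle w u]| == j].

Definition is_ideal (I : {set 'I_fn}) : Prop :=
  forall u v : 'I_fn, fle u v -> v \in I -> u \in I.

(* statistics; nonexistent elements (None) give the zero statistic *)
Definition chi (o : option 'I_fn) (I : {set 'I_fn}) : int :=
  if o is Some q then ((q \in I) : nat)%:Z else 0.

Definition minC (I : {set 'I_fn}) (q : 'I_fn) : bool :=
  (q \notin I) && [forall w, (w \notin I) ==> ~~ flt w q].
Definition maxI (I : {set 'I_fn}) (q : 'I_fn) : bool :=
  (q \in I) && [forall w, (w \in I) ==> ~~ flt q w].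

Definition Tst (o : option 'I_fn) (I : {set 'I_fn}) : int :=
  if o is Some q then
    (if minC I q then 1 else if maxI I q then -1 else 0)%R
  else 0.

Definition ole (o1 o2 : option 'I_fn) : bool :=
  match o1, o2 with Some a, Some b => fle a b | _, _ => false end.
Definition olt (o1 o2 : option 'I_fn) : bool :=
  match o1, o2 with Some a, Some b => flt a b | _, _ => false end.

Definition icard (o1 o2 : option 'I_fn) : nat :=
  #|[set w | ole o1 (Some w) && ole (Some w) o2]|.

End Fence.

(* Main.v *)
Require Import Defs.
From mathcomp Require Import all_boot all_order all_algebra.
Import GRing.Theory Num.Theory.
From mathcomp Require Import zify ring.

Set Implicit Arguments.
Unset Strict Implicit.

Ltac plia := repeat match goal with H : context [predn ?x] |- _ => rewrite -subn1 in H end; rewrite -?subn1; lia.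

Section Alg.
Local Open Scope ring_scope.
Lemma S1 (e : nat -> int) j :
  \sum_(1 <= h < j.+1) (h%:Z * (e h.-1 - 2 * e h + e h.+1))
  = e 0%N - e j - j%:Z * (e j - e j.+1).
Proof.
elim: j => [|j IH]; first by rewrite big_geq // mul0r subr0 subrr.
rewrite big_nat_recr //= IH.
rewrite intS; ring.
Qed.

Lemma S2 (e : nat -> int) (c j d : nat) :
  \sum_(j.+1 <= h < j.+1 + d) ((c%:Z - h%:Z) * (e h.-1 - 2 * e h + e h.+1))
  = (c%:Z - j%:Z - 1) * (e j - e j.+1)
    - (c%:Z - (j.+1 + d)%N%:Z + 1) * (e (j + d)%N - e (j + d).+1)
    - e j.+1 + e (j + d)%N.
Proof.
elim: d => [|d IH].
  rewrite !addn0 big_geq // intS; ring.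
rewrite addnS big_nat_recr /=; last by rewrite leq_addr.
rewrite IH !addnS !addSn /= !intS !PoszD; ring.
Qed.

End Alg.

Section S.
Variable alpha : seq nat.
Local Notation N := (fn alpha).
Local Notation ap := (apart alpha).
Local Notation ft := (ft alpha).
Local Notation idx := (idx alpha).

Definition up k := has (fun i => odd i && (ap i.-1 <= k < ap i)) (iota 1 ft).
Definition dn k := has (fun i => ~~ odd i && (ap i.-1 <= k < ap i)) (iota 1 ft).

Lemma covE u v : cov alpha u v =
  ((idx v == (idx u).+1) && up (idx u)) || ((idx u == (idx v).+1) && dn (idx v)).
Proof. by []. Qed.

Lemma apartS i : ap i.+1 = ap i + alph alpha i.+1.
Proof. by rewrite /apart big_nat_recr. Qed.

Lemma apart_mono i i' : (i <= i')%N -> (ap i <= ap i')%N.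
Proof.
move=> /subnKC <-; elim: (i' - i)%N => [|d IH]; first by rewrite addn0.
by rewrite addnS apartS; apply: leq_trans IH (leq_addr _ _).
Qed.

Lemma seg_uniq k i i' : (ap i.-1 <= k < ap i)%N -> (ap i'.-1 <= k < ap i')%N -> i = i'.
Proof.
move=> /andP[h1 h2] /andP[h3 h4].
case: (ltngtP i i') => // H.
- have : (i <= i'.-1)%N by case: i' H {h3 h4}.
  move/apart_mono; lia.
- have : (i' <= i.-1)%N by case: i H {h1 h2}.
  move/apart_mono; lia.
Qed.

Lemma up_seg i k : (1 <= i <= ft)%N -> (ap i.-1 <= k < ap i)%N -> up k = odd i.
Proof.
move=> Hi Hk; apply/hasP/idP.
- by move=> [i' _ /andP[o r]]; rewrite -(@seg_uniq _ _ _ r Hk).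
- move=> o; exists i => //; last by rewrite o Hk.
  rewrite mem_iota; lia.
Qed.

Lemma dn_seg i k : (1 <= i <= ft)%N -> (ap i.-1 <= k < ap i)%N -> dn k = ~~ odd i.
Proof.
move=> Hi Hk; apply/hasP/idP.
- by move=> [i' _ /andP[o r]]; rewrite -(@seg_uniq _ _ _ r Hk).
- move=> o; exists i => //; last by rewrite o Hk.
  rewrite mem_iota; lia.
Qed.

Lemma path_char u v : fle alpha u v ->
  (forall k, (idx u <= k < idx v)%N -> up k) /\
  (forall k, (idx v <= k < idx u)%N -> dn k).
Proof.
move/connectP=> [p]; elim: p u => [|w p IH] u /=.
  by move=> _ ->; split=> k; lia.
move=> /andP[cuw pth] lst; have [H1 H2] := IH w pth lst.
move: cuw; rewrite covE => /orP[/andP[/eqP e U]|/andP[/eqP e D]]; split=> k Hk.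
- case: (eqVneq k (idx u)) => [->//|ne]; apply: H1; lia.
- apply: H2; lia.
- apply: H1; lia.
- case: (eqVneq k (idx w)) => [->//|ne]; apply: H2; lia.
Qed.

Lemma conn_up u v : (idx u <= idx v)%N ->
  (forall k, (idx u <= k < idx v)%N -> up k) -> fle alpha u v.
Proof.
move=> H; move Hd: (idx v - idx u)%N => d.
elim: d v H Hd => [|d IH] v H Hd Hup.
  have -> : v = u by apply: val_inj; rewrite /idx in H Hd; simpl; lia.
  exact: connect0.
have Hv' : ((nat_of_ord v).-1 < N)%N by have := ltn_ord v; lia.
pose v' := Ordinal Hv'.
have iv' : idx v = (idx v').+1 by rewrite /idx /= in Hd *; lia.
apply: (connect_trans (y := v')).
  apply: IH; rewrite ?iv' in H Hd *; try lia.
  move=> k Hk; apply: Hup; lia.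
apply: connect1; rewrite covE iv' eqxx /=; apply/orP; left; apply: Hup; rewrite iv'; lia.
Qed.

Lemma conn_dn u v : (idx v <= idx u)%N ->
  (forall k, (idx v <= k < idx u)%N -> dn k) -> fle alpha u v.
Proof.
move=> H; move Hd: (idx u - idx v)%N => d.
elim: d v H Hd => [|d IH] v H Hd Hdn.
  have -> : v = u by apply: val_inj; rewrite /idx in H Hd; simpl; lia.
  exact: connect0.
have Hv' : ((nat_of_ord v).+1 < N)%N by have := ltn_ord u; rewrite /idx in H Hd; lia.
pose v' := Ordinal Hv'.
have iv' : idx v' = (idx v).+1 by [].
apply: (connect_trans (y := v')).
  apply: IH; rewrite ?iv'; try lia.
  move=> k Hk; apply: Hdn; lia.
apply: connect1; rewrite covE iv' eqxx /=; apply/orP; right.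
apply: Hdn; lia.
Qed.


Hypothesis Ht : (2 <= size alpha)%N.
Hypothesis Hpos : all (fun a => 0 < a)%N alpha.
Hypothesis Ha1 : (2 <= alph alpha 1)%N.
Hypothesis Hat : (2 <= alph alpha (size alpha))%N.

Lemma ftE : ft = size alpha. Proof. by []. Qed.

Lemma alph_pos k : (1 <= k <= ft)%N -> (0 < alph alpha k)%N.
Proof.
move=> Hk; rewrite /alph; move/allP: Hpos; apply; apply: mem_nth.
by rewrite ftE in Hk; case: k Hk => // k /andP[_ H].
Qed.

Lemma apart_strict k k' : (k < k' <= ft)%N -> (ap k < ap k')%N.
Proof.
case: k' => // k' H; rewrite apartS.
have := @apart_mono k k' (_ : k <= k')%N; have := @alph_pos k'.+1; lia.
Qed.

Lemma NE : N = (ap ft).-1. Proof. by []. Qed.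

Lemma apft : (ap ft = ap ft.-1 + alph alpha ft)%N.
Proof. rewrite ftE; case: (size alpha) Ht => // n _; exact: apartS. Qed.

Lemma ap1 : ap 1 = alph alpha 1.
Proof. by rewrite apartS /apart big_geq. Qed.

Lemma ap0 : ap 0 = 0%N.
Proof. by rewrite /apart big_geq. Qed.

Lemma apft_ge : (ap 1 + 2 <= ap ft)%N.
Proof.
have h1 := Hat; have h2 := Ht; rewrite -ftE in h1 h2.
rewrite apft; have := @apart_mono 1 ft.-1 (_ : 1 <= ft.-1)%N; rewrite /alph in h1 *.
have : ap 1 <= ap ft.-1 by apply: apart_mono; plia.
plia.
Qed.

Lemma N_gt0 : (0 < N)%N.
Proof. rewrite NE; have := apft_ge; lia. Qed.


Variable i : nat.
Hypothesis Hi : (1 <= i <= ft)%N.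
Hypothesis Hai : (2 <= alph alpha i)%N.

Local Notation L := (ap i.-1).
Local Notation R := (ap i).

Lemma RL : R = (L + alph alpha i)%N.
Proof. by case: i Hi => // i' _; rewrite apartS. Qed.

Lemma R_le : (R <= N.+1)%N.
Proof.
rewrite NE; have := apft_ge; have : (R <= ap ft)%N by apply: apart_mono; plia.
plia.
Qed.

Lemma R_lt : (i < ft)%N -> (R.+2 <= N.+1)%N.
Proof.
move=> H; rewrite NE apft; have := apft_ge.
have : (R <= ap ft.-1)%N by apply: apart_mono; plia.
have h1 := Hat; rewrite -ftE /alph in h1 *; plia.
Qed.

Lemma R_ft : i = ft -> R = N.+1.
Proof. move=> ->; rewrite NE; have := apft_ge; plia. Qed.

Lemma L_ge : (2 <= i)%N -> (2 <= L)%N.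
Proof.
move=> H; have : (ap 1 <= L)%N by apply: apart_mono; plia.
rewrite ap1; plia.
Qed.

Lemma L_1 : i = 1%N -> L = 0%N.
Proof. by move=> ->; rewrite ap0. Qed.

Lemma idx_range (u : 'I_N) : (1 <= idx u <= N)%N.
Proof. rewrite /idx; have := ltn_ord u; lia. Qed.

Lemma idx_inj (u v : 'I_N) : idx u = idx v -> u = v.
Proof. by move=> [] /val_inj. Qed.

Lemma upL k : (L <= k < R)%N -> up k = odd i.
Proof. exact: up_seg. Qed.
Lemma dnL k : (L <= k < R)%N -> dn k = ~~ odd i.
Proof. exact: dn_seg. Qed.

Lemma seg_iff u : (u \in seg alpha i) = (L <= idx u <= R)%N.
Proof.
have hu := idx_range u.
rewrite /seg; case: eqP => [e1|n1].
  by rewrite inE e1 ap0 /=.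
case: eqP => [e2|n2]; rewrite inE //.
rewrite e2 -e2 (R_ft e2); apply/idP/idP; plia.
Qed.

Lemma sharedP u : reflect (exists2 k, (1 <= k <= ft.-1)%N & idx u = ap k) (u \in shared alpha).
Proof.
rewrite inE; apply: (iffP hasP) => [[k Hk /eqP e]|[k Hk e]].
  by exists k => //; move: Hk; rewrite mem_iota; plia.
by exists k; [rewrite mem_iota; plia | apply/eqP].
Qed.

Lemma shared_range u : u \in shared alpha -> (2 <= idx u < N)%N.
Proof.
move/sharedP=> [k Hk ->].
have : (ap 1 <= ap k)%N by apply: apart_mono; plia.
have : (ap k <= ap ft.-1)%N by apply: apart_mono; plia.
have := apft_ge; rewrite NE !apft ap1; have h1 := Hat; rewrite -ftE in h1; plia.
Qed.

Lemma shared_seg u : u \in seg alpha i -> u \in shared alpha -> idx u = L \/ idx u = R.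
Proof.
rewrite seg_iff => Hs /sharedP [k Hk e].
case: (ltngtP k i.-1) => H.
- have := @apart_strict k i.-1; plia.
- case: (ltngtP k i) => H'.
  + plia.
  + have := @apart_strict i k; plia.
  + by right; rewrite e H'.
- by left; rewrite e H.
Qed.

Lemma bseg_iff u : (u \in bseg alpha i) = (L < idx u < R)%N.
Proof.
rewrite inE seg_iff; have hu := idx_range u.
case: (boolP (u \in shared alpha)) => /= Hs.
- apply/esym/negbTE; have := @shared_seg u; rewrite seg_iff.
  case: (boolP (L <= idx u <= R)%N) => H; last by plia.
  move=> /(_ isT Hs); plia.
- apply/idP/idP; last by plia.
  move=> H; have : idx u != L.
    apply/eqP=> e; move/negP: Hs; apply; apply/sharedP; exists i.-1 => //.
    case: (ltnP 1 i) => h; first by plia.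
    have : i = 1%N by plia.
    by move/L_1; plia.
  have : idx u != R.
    apply/eqP=> e; move/negP: Hs; apply; apply/sharedP; exists i => //.
    case: (ltnP i ft) => h; first by plia.
    have : i = ft by plia.
    by move/R_ft; plia.
  plia.
Qed.


Local Notation A := (alph alpha i).

Definition pos h := if odd i then (L + h)%N else (R - h)%N.
Definition oc h : option 'I_N := if pos h is m.+1 then insub m else None.

Lemma oc_some h u : oc h = Some u -> idx u = pos h.
Proof.
rewrite /oc; case: (pos h) => // m; case: insubP => // v _ <- [<-].
by rewrite /idx.
Qed.

Lemma oc_idx h u : idx u = pos h -> oc h = Some u.
Proof. by rewrite /oc => <-; rewrite /idx valK. Qed.

Lemma oc_ex h : (1 <= pos h <= N)%N -> exists u, oc h = Some u.
Proof.
move=> H; have Hm : ((pos h).-1 < N)%N by plia.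
exists (Ordinal Hm); apply: oc_idx; rewrite /idx /=; plia.
Qed.

Lemma oc_none h : oc h = None -> ~~ (1 <= pos h <= N)%N.
Proof.
move=> e; apply/negP => H; have [u] := oc_ex H; by rewrite e.
Qed.

Lemma pos_range h : (h <= A)%N -> (L <= pos h <= R)%N.
Proof. rewrite /pos RL; case: (odd i); plia. Qed.

Lemma chain_le u v : (L <= idx u <= R)%N -> (L <= idx v <= R)%N ->
  fle alpha u v = (if odd i then (idx u <= idx v)%N else (idx v <= idx u)%N).
Proof.
move=> Hu Hv; apply/idP/idP.
- move/path_char=> [H1 H2]; case: (boolP (odd i)) => o.
  + case: (leqP (idx u) (idx v)) => // h.
    have := H2 (idx v); rewrite dnL ?o; plia.
  + case: (leqP (idx v) (idx u)) => // h.
    have := H1 (idx u); rewrite upL; rewrite ?(negbTE o); plia.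
- case: (boolP (odd i)) => o h.
  + apply: conn_up => // k Hk; rewrite upL //; plia.
  + apply: conn_dn => // k Hk; rewrite dnL ?o //; plia.
Qed.

Lemma oc_le h h' d d' : (h <= h' <= A)%N -> oc h = Some d -> oc h' = Some d' -> fle alpha d d'.
Proof.
move=> H /oc_some e /oc_some e'.
rewrite chain_le ?e ?e'; try (apply: pos_range; plia).
rewrite /pos; case: (odd i); plia.
Qed.

Lemma oc_le_inv h h' d d' : (h <= A)%N -> (h' <= A)%N -> oc h = Some d -> oc h' = Some d' ->
  fle alpha d d' -> (h <= h')%N.
Proof.
move=> H H' /oc_some e /oc_some e'.
rewrite chain_le ?e ?e'; try (apply: pos_range; plia).
have := pos_range H; have := pos_range H'.
rewrite /pos RL; case: (odd i); plia.
Qed.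

Lemma oc_inj h h' u : (h <= A)%N -> (h' <= A)%N -> oc h = Some u -> oc h' = Some u -> h = h'.
Proof.
move=> H H' e e'; apply/eqP; rewrite eqn_leq.
by rewrite (oc_le_inv H H' e e' (connect0 _ _)) (oc_le_inv H' H e' e (connect0 _ _)).
Qed.

Lemma ex_c k : (1 <= k <= A.-1)%N -> exists u, oc k = Some u.
Proof.
move=> H; apply: oc_ex; have := R_le; rewrite /pos RL; case: (odd i); plia.
Qed.

Lemma lower k u w : (1 <= k <= A.-1)%N -> oc k = Some u -> flt alpha w u ->
  exists d, oc k.-1 = Some d /\ fle alpha w d.
Proof.
move=> Hk /oc_some eu /andP[ne /path_char [H1 H2]].
have neq : idx w != idx u by apply: contra ne => /eqP/idx_inj ->.
have hw := idx_range w; have hu := idx_range u; have hR := R_le; have hRL := RL.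
case: (boolP (odd i)) => o; rewrite /pos ?o ?(negbTE o) in eu.
- have lt : (idx w < idx u)%N.
    case: (ltngtP (idx w) (idx u)) => // h; last by rewrite h eqxx in neq.
    have := H2 (idx u); rewrite dnL ?o; plia.
  have [d ed] : exists d, oc k.-1 = Some d by apply: oc_ex; rewrite /pos o; plia.
  exists d; split => //; have := oc_some ed; rewrite /pos o => edi.
  apply: conn_up; first by plia.
  move=> j Hj; apply: H1; plia.
- have lt : (idx u < idx w)%N.
    case: (ltngtP (idx w) (idx u)) => // h; last by rewrite h eqxx in neq.
    have := H1 (idx u).-1; rewrite upL ?(negbTE o); plia.
  have [d ed] : exists d, oc k.-1 = Some d by apply: oc_ex; rewrite /pos (negbTE o); plia.
  exists d; split => //; have := oc_some ed; rewrite /pos (negbTE o) => edi.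
  apply: conn_dn; first by plia.
  move=> j Hj; apply: H2; plia.
Qed.


Lemma upper k u w : (1 <= k <= A.-1)%N -> oc k = Some u -> flt alpha u w ->
  exists d, oc k.+1 = Some d /\ fle alpha d w.
Proof.
move=> Hk /oc_some eu /andP[ne /path_char [H1 H2]].
have neq : idx w != idx u by apply: contra ne => /eqP/idx_inj ->.
have hw := idx_range w; have hu := idx_range u; have hR := R_le; have hRL := RL.
case: (boolP (odd i)) => o; rewrite /pos ?o ?(negbTE o) in eu.
- have lt : (idx u < idx w)%N.
    case: (ltngtP (idx w) (idx u)) => // h; last by rewrite h eqxx in neq.
    have := H2 (idx u).-1; rewrite dnL ?o; plia.
  have [d ed] : exists d, oc k.+1 = Some d by apply: oc_ex; rewrite /pos o; plia.
  exists d; split => //; have := oc_some ed; rewrite /pos o => edi.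
  apply: conn_up; first by plia.
  move=> j Hj; apply: H1; plia.
- have lt : (idx w < idx u)%N.
    case: (ltngtP (idx w) (idx u)) => // h; last by rewrite h eqxx in neq.
    have := H1 (idx u); rewrite upL ?(negbTE o); plia.
  have [d ed] : exists d, oc k.+1 = Some d by apply: oc_ex; rewrite /pos (negbTE o); plia.
  exists d; split => //; have := oc_some ed; rewrite /pos (negbTE o) => edi.
  apply: conn_dn; first by plia.
  move=> j Hj; apply: H2; plia.
Qed.

Lemma interval a b ua ub u : (1 <= a <= b)%N -> (b <= A.-1)%N ->
  oc a = Some ua -> oc b = Some ub -> fle alpha ua u -> fle alpha u ub ->
  exists2 h, (a <= h <= b)%N & oc h = Some u.
Proof.
move=> Hab Hb /oc_some ea /oc_some eb /path_char [G1 G2] /path_char [K1 K2].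
have hu := idx_range u; have hR := R_le; have hRL := RL.
case: (boolP (odd i)) => o; rewrite /pos ?o ?(negbTE o) in ea eb.
- have l1 : (L + a <= idx u)%N.
    case: (leqP (L + a) (idx u)) => // h.
    have := G2 (L + a).-1; rewrite dnL ?o; plia.
  have l2 : (idx u <= L + b)%N.
    case: (leqP (idx u) (L + b)) => // h.
    have := K2 (L + b); rewrite dnL ?o; plia.
  exists (idx u - L)%N; first by plia.
  apply: oc_idx; rewrite /pos o; plia.
- have l1 : (idx u <= R - a)%N.
    case: (leqP (idx u) (R - a)) => // h.
    have := G1 (R - a); rewrite upL ?(negbTE o); plia.
  have l2 : (R - b <= idx u)%N.
    case: (leqP (R - b) (idx u)) => // h.
    have := K1 (R - b).-1; rewrite upL ?(negbTE o); plia.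
  exists (R - idx u)%N; first by plia.
  apply: oc_idx; rewrite /pos (negbTE o); plia.
Qed.


Lemma card_int lo hi : (lo <= hi <= N)%N ->
  #|[set w : 'I_N | (lo < idx w <= hi)%N]| = (hi - lo)%N.
Proof.
elim: hi => [|hi IH] H.
  have -> : lo = 0%N by plia.
  apply/eqP; rewrite cards_eq0; apply/eqP/setP => w; rewrite !inE; apply/negbTE; plia.
case: (eqVneq lo hi.+1) => [e|ne].
  rewrite e subnn; apply/eqP; rewrite cards_eq0; apply/eqP/setP => w; rewrite !inE; apply/negbTE; plia.
have Hh : (hi < N)%N by plia.
pose x := Ordinal Hh.
have -> : [set w : 'I_N | (lo < idx w <= hi.+1)%N] = x |: [set w : 'I_N | (lo < idx w <= hi)%N].
  apply/setP => w; rewrite !inE; case: (eqVneq w x) => [->|nx] /=.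
    apply/idP; rewrite /idx /=; plia.
  have : idx w != idx x by apply: contra nx => /eqP/idx_inj ->.
  rewrite /idx /= => nx'; apply/idP/idP; plia.
rewrite cardsU1 IH; last by plia.
rewrite inE /idx /=; have -> : (lo < hi.+1 <= hi)%N = false by apply/negbTE; plia.
plia.
Qed.

Lemma in_sep (B : {set 'I_N}) (P : pred 'I_N) w :
  (w \in [set x in B | P x]) = (w \in B) && P w.
Proof. by rewrite inE. Qed.

Lemma bseg_oc v : v \in bseg alpha i -> exists2 h, (1 <= h <= A.-1)%N & oc h = Some v.
Proof.
rewrite bseg_iff => Hv; have hRL := RL.
case: (boolP (odd i)) => o.
  exists (idx v - L)%N; first by plia.
  by apply: oc_idx; rewrite /pos o; plia.
exists (R - idx v)%N; first by plia.
by apply: oc_idx; rewrite /pos (negbTE o); plia.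
Qed.

Lemma count_c h v : (1 <= h <= A.-1)%N -> oc h = Some v ->
  #|[set w in bseg alpha i | fle alpha w v]| = h.
Proof.
move=> Hh ev; have hRL := RL; have hR := R_le.
have ev' := oc_some ev.
have vr : (L <= idx v <= R)%N by rewrite ev'; apply: pos_range; plia.
case: (boolP (odd i)) => o; rewrite /pos ?o ?(negbTE o) in ev'.
- have -> : [set w in bseg alpha i | fle alpha w v] = [set w : 'I_N | (L < idx w <= L + h)%N].
    apply/setP => w; rewrite in_sep bseg_iff inE.
    case: (boolP (L < idx w < R)%N) => /= hw; last by apply/esym/negbTE; plia.
    rewrite chain_le //; last by plia.
    rewrite o; apply/idP/idP; plia.
  rewrite card_int; plia.
- have -> : [set w in bseg alpha i | fle alpha w v] = [set w : 'I_N | ((R - h).-1 < idx w <= R.-1)%N].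
    apply/setP => w; rewrite in_sep bseg_iff inE.
    case: (boolP (L < idx w < R)%N) => /= hw; last by apply/esym/negbTE; plia.
    rewrite chain_le //; last by plia.
    rewrite (negbTE o); apply/idP/idP; plia.
  rewrite card_int; plia.
Qed.

Lemma sel_eq k : (1 <= k <= A.-1)%N -> sel alpha i k = oc k.
Proof.
move=> Hk; have [u eu] := ex_c Hk; rewrite eu /sel.
case: pickP => [v /andP[vb /eqP cnt] | none].
- have [h Hh ev] := bseg_oc vb.
  rewrite (count_c Hh ev) in cnt; by rewrite -eu -cnt ev.
- have := none u; rewrite (count_c Hk eu) eqxx andbT bseg_iff.
  have := oc_some eu; rewrite /pos; have hRL := RL.
  by case: (odd i) => -> /negbT H; exfalso; plia.
Qed.


Lemma peak_iff u : (1 < idx u < N)%N -> is_peak alpha u = up (idx u).-1 && dn (idx u).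
Proof.
move=> H.
have Hl : ((idx u).-2 < N)%N by plia.
have Hr : (idx u < N)%N by plia.
pose wl := Ordinal Hl; pose wr := Ordinal Hr.
have iu : idx u = (nat_of_ord u).+1 by [].
have il : idx wl = (idx u).-1 by rewrite {1}/idx /=; plia.
have ir : idx wr = (idx u).+1 by [].
have nlr : wl != wr by apply/eqP => /(congr1 idx); rewrite il ir => h; exfalso; plia.
have E : [set w | cov alpha w u] =
  (if up (idx u).-1 then [set wl] else set0) :|: (if dn (idx u) then [set wr] else set0).
  apply/setP => w; rewrite !inE covE.
  have -> : (idx u == (idx w).+1) = (w == wl).
    apply/eqP/eqP => [e|->]; last by rewrite il; plia.
    by apply: idx_inj; rewrite il; plia.
  have -> : (idx w == (idx u).+1) = (w == wr).
    apply/eqP/eqP => [e|->]; last by [].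
    by apply: idx_inj; rewrite ir.
  case: (eqVneq w wl) => [->|nl].
    rewrite ?eqxx (negbTE nlr) il ?andTb ?andFb ?orbF.
    by case: (up _); case: (dn _); rewrite ?in_set1 ?in_set0 ?eqxx ?(negbTE nlr) ?orbF ?orbT ?inE.
  case: (eqVneq w wr) => [->|nr].
    rewrite ?eqxx ?andTb ?andFb ?orbFb.
    case: (up _); case: (dn _); rewrite ?in_set1 ?in_set0 ?eqxx ?(negbTE nlr) ?orbF ?orbT ?inE; try done.
    by rewrite eq_sym (negbTE nlr).
  rewrite ?andFb ?orbF.
  by case: (up _); case: (dn _); rewrite ?in_set1 ?in_set0 ?(negbTE nl) ?(negbTE nr) ?inE ?(negbTE nl) ?(negbTE nr).
rewrite /is_peak E.
case: (up _); case: (dn _); rewrite ?set0U ?setU0 ?cards1 ?cards0 //.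
by rewrite cards2 nlr.
Qed.

Lemma valley_iff u : (1 < idx u < N)%N -> is_valley alpha u = dn (idx u).-1 && up (idx u).
Proof.
move=> H.
have Hl : ((idx u).-2 < N)%N by plia.
have Hr : (idx u < N)%N by plia.
pose wl := Ordinal Hl; pose wr := Ordinal Hr.
have iu : idx u = (nat_of_ord u).+1 by [].
have il : idx wl = (idx u).-1 by rewrite {1}/idx /=; plia.
have ir : idx wr = (idx u).+1 by [].
have nlr : wl != wr by apply/eqP => /(congr1 idx); rewrite il ir => h; exfalso; plia.
have E : [set w | cov alpha u w] =
  (if dn (idx u).-1 then [set wl] else set0) :|: (if up (idx u) then [set wr] else set0).
  apply/setP => w; rewrite !inE covE.
  have -> : (idx u == (idx w).+1) = (w == wl).
    apply/eqP/eqP => [e|->]; last by rewrite il; plia.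
    by apply: idx_inj; rewrite il; plia.
  have -> : (idx w == (idx u).+1) = (w == wr).
    apply/eqP/eqP => [e|->]; last by [].
    by apply: idx_inj; rewrite ir.
  case: (eqVneq w wl) => [->|nl].
    rewrite ?eqxx (negbTE nlr) il ?andTb ?andFb ?orbF.
    by case: (dn _); case: (up _); rewrite ?in_set1 ?in_set0 ?eqxx ?(negbTE nlr) ?orbF ?orbT ?inE.
  case: (eqVneq w wr) => [->|nr].
    rewrite ?eqxx ?andTb ?andFb ?orbFb.
    case: (dn _); case: (up _); rewrite ?in_set1 ?in_set0 ?eqxx ?(negbTE nlr) ?orbF ?orbT ?inE; try done.
    by rewrite eq_sym (negbTE nlr).
  rewrite ?andFb ?orbF.
  by case: (dn _); case: (up _); rewrite ?in_set1 ?in_set0 ?(negbTE nl) ?(negbTE nr) ?inE ?(negbTE nl) ?(negbTE nr).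
rewrite /is_valley E.
case: (dn _); case: (up _); rewrite ?set0U ?setU0 ?cards1 ?cards0 //.
by rewrite cards2 nlr.
Qed.


Lemma FL : (2 <= i)%N -> up L.-1 = ~~ odd i /\ dn L.-1 = odd i.
Proof.
move=> H2; have hL := L_ge H2.
have Hs : (ap (i.-1).-1 <= L.-1 < ap i.-1)%N.
  have := @apart_strict (i.-1).-1 i.-1; plia.
rewrite (up_seg _ Hs) ?(dn_seg _ Hs); last by plia.
by case: i H2 {Hs hL} => [|[|i']] //= _; rewrite negbK.
plia.
Qed.

Lemma FR : (i < ft)%N -> up R = ~~ odd i /\ dn R = odd i.
Proof.
move=> H.
have Hs : (ap i <= R < ap i.+1)%N.
  have := @apart_strict i i.+1; plia.
rewrite (@up_seg i.+1 R _ Hs) ?(@dn_seg i.+1 R _ Hs) /= ?negbK //; plia.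
Qed.

Lemma FIn : up R.-1 = odd i /\ dn R.-1 = ~~ odd i /\ up L = odd i /\ dn L = ~~ odd i.
Proof.
have hRL := RL.
by rewrite upL ?dnL ?upL ?dnL //; plia.
Qed.

Lemma shL u : (2 <= i)%N -> idx u = L -> u \in shared alpha.
Proof. move=> H e; apply/sharedP; exists i.-1 => //; plia. Qed.

Lemma shR u : (i < ft)%N -> idx u = R -> u \in shared alpha.
Proof. move=> H e; apply/sharedP; exists i => //; plia. Qed.

Lemma i_ge2 u : idx u = L -> (2 <= i)%N.
Proof.
move=> e; case: (ltnP 1 i) => // h; have := idx_range u.
have : i = 1%N by plia.
move/L_1; plia.
Qed.

Lemma i_ltft u : idx u = R -> (i < ft)%N.
Proof.
move=> e; case: (ltnP i ft) => // h; have := idx_range u.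
have : i = ft by plia.
move/R_ft; plia.
Qed.

Lemma peak_eq : peakS alpha i = oc A.
Proof.
have hRL := RL; have [i1 [i2 [i3 i4]]] := FIn.
rewrite /peakS; case: pickP => [u /andP[us /andP[ush pk]] | none].
- apply/esym/oc_idx; have r := shared_range ush.
  rewrite peak_iff in pk; last by plia.
  have [e|e] := shared_seg us ush.
  + have [f1 f2] := FL (i_ge2 e).
    move: pk; rewrite e f1 i4 /pos; case: (odd i) => //= _; plia.
  + have [f1 f2] := FR (i_ltft e).
    move: pk; rewrite e f2 i1 /pos; case: (odd i) => //= _; plia.
- case E: (oc A) => [u|] //; have := none u.
  have eu := oc_some E.
  have -> : u \in seg alpha i by rewrite seg_iff eu; apply: pos_range.
  move: eu; rewrite /pos; case: (boolP (odd i)) => o eu.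
  + have e : idx u = R by plia.
    have ush := shR (i_ltft e) e.
    rewrite ush peak_iff; last by have := shared_range ush; plia.
    by have [f1 f2] := FR (i_ltft e); rewrite e f2 i1 o.
  + have e : idx u = L by plia.
    have ush := shL (i_ge2 e) e.
    rewrite ush peak_iff; last by have := shared_range ush; plia.
    by have [f1 f2] := FL (i_ge2 e); rewrite e f1 i4 o.
Qed.

Lemma valley_eq : valleyS alpha i = oc 0.
Proof.
have hRL := RL; have [i1 [i2 [i3 i4]]] := FIn.
rewrite /valleyS; case: pickP => [u /andP[us /andP[ush pk]] | none].
- apply/esym/oc_idx; have r := shared_range ush.
  rewrite valley_iff in pk; last by plia.
  have [e|e] := shared_seg us ush.
  + have [f1 f2] := FL (i_ge2 e).
    move: pk; rewrite e f2 i3 /pos; case: (odd i) => //= _; plia.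
  + have [f1 f2] := FR (i_ltft e).
    move: pk; rewrite e f1 i2 /pos; case: (odd i) => //= _; plia.
- case E: (oc 0) => [u|] //; have := none u.
  have eu := oc_some E.
  have -> : u \in seg alpha i by rewrite seg_iff eu; apply: pos_range.
  move: eu; rewrite /pos; case: (boolP (odd i)) => o eu.
  + have e : idx u = L by plia.
    have ush := shL (i_ge2 e) e.
    rewrite ush valley_iff; last by have := shared_range ush; plia.
    by have [f1 f2] := FL (i_ge2 e); rewrite e f2 i3 o.
  + have e : idx u = R by plia.
    have ush := shR (i_ltft e) e.
    rewrite ush valley_iff; last by have := shared_range ush; plia.
    by have [f1 f2] := FR (i_ltft e); rewrite e f1 i2 o.
Qed.


Lemma sum_chain (Rt : Type) (id0 : Rt) (op : Monoid.com_law id0) (F : 'I_N -> Rt)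
  (P : pred 'I_N) (c : nat -> 'I_N) a b :
  (forall h, (a <= h <= b)%N -> P (c h)) ->
  (forall u, P u -> exists2 h, (a <= h <= b)%N & u = c h) ->
  (forall h h', (a <= h <= b)%N -> (a <= h' <= b)%N -> c h = c h' -> h = h') ->
  \big[op/id0]_(u | P u) F u = \big[op/id0]_(a <= h < b.+1) F (c h).
Proof.
move=> H1 H2 H3.
rewrite /index_iota -(big_map c xpredT F) -big_filter.
apply: perm_big; apply: uniq_perm.
- by rewrite filter_uniq // index_enum_uniq.
- rewrite map_inj_in_uniq ?iota_uniq //.
  move=> x y; rewrite !mem_iota => hx hy; apply: H3; plia.
- move=> u; rewrite mem_filter mem_index_enum andbT; apply/idP/mapP.
  + move=> /H2 [h hh ->]; exists h => //; rewrite mem_iota; plia.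
  + move=> [h]; rewrite mem_iota => hh ->; apply: H1; plia.
Qed.

Definition bI (I : {set 'I_N}) h : bool := if oc h is Some x then x \in I else h == 0%N.
Definition eI (I : {set 'I_N}) h : int := (bI I h : nat)%:Z.

Lemma oc_none_lo k : (1 <= k <= A.-1)%N -> oc k.-1 = None -> k.-1 = 0%N.
Proof.
move=> Hk E; case: (eqVneq k.-1 0%N) => // ne.
have [d E'] : exists d, oc k.-1 = Some d by apply: ex_c; plia.
by rewrite E in E'.
Qed.

Lemma oc_none_hi k : (1 <= k <= A.-1)%N -> oc k.+1 = None -> k.+1 = A.
Proof.
move=> Hk E; case: (eqVneq k.+1 A) => // ne.
have [d E'] : exists d, oc k.+1 = Some d by apply: ex_c; plia.
by rewrite E in E'.
Qed.

Lemma Tst_c (I : {set 'I_N}) k u : is_ideal alpha I -> (1 <= k <= A.-1)%N -> oc k = Some u ->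
  Tst alpha (Some u) I = (eI I k.-1 - 2 * eI I k + eI I k.+1)%R.
Proof.
move=> Iid Hk eu.
have hmin : [forall w, (w \notin I) ==> ~~ flt alpha w u] = bI I k.-1.
  rewrite /bI; case E: (oc k.-1) => [d|].
  - have ndu : d != u.
      apply/eqP => edu; have : k.-1 = k.
        by apply: (@oc_inj k.-1 k d); rewrite ?E ?edu ?eu //; plia.
      plia.
    have fdu : fle alpha d u by apply: (@oc_le k.-1 k) E eu; plia.
    apply/forallP/idP => [H|dI w].
    * apply/negPn/negP => dn; have := H d; rewrite dn /= /flt ndu fdu //.
    * apply/implyP => wn; apply/negP => /(lower Hk eu) [d' [E' fwd']].
      rewrite E in E'; case: E' fwd' => <- fwd.
      by move: wn; rewrite (Iid _ _ fwd dI).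
  - rewrite (oc_none_lo Hk E) eqxx.
    apply/forallP => w; apply/implyP => _; apply/negP => /(lower Hk eu) [d' [E' _]].
    by rewrite E in E'.
have hmax : [forall w, (w \in I) ==> ~~ flt alpha u w] = ~~ bI I k.+1.
  rewrite /bI; case E: (oc k.+1) => [d|].
  - have ndu : u != d.
      apply/eqP => edu; have : k.+1 = k.
        by apply: (@oc_inj k.+1 k d); rewrite ?E -?edu ?eu //; plia.
      plia.
    have fud : fle alpha u d by apply: (@oc_le k k.+1) eu E; plia.
    apply/forallP/idP => [H|dI w].
    * apply/negP => dn; have := H d; rewrite dn /= /flt ndu fud //.
    * apply/implyP => wn; apply/negP => /(upper Hk eu) [d' [E' fdw]].
      rewrite E in E'; case: E' fdw => <- fdw.
      by move: dI; rewrite (Iid _ _ fdw wn).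
  - rewrite /=.
    apply/forallP => w; apply/implyP => _; apply/negP => /(upper Hk eu) [d' [E' _]].
    by rewrite E in E'.
have mono1 : u \in I -> bI I k.-1.
  rewrite /bI; case E: (oc k.-1) => [d|] uI.
    by apply: (Iid _ _ _ uI); apply: (@oc_le k.-1 k) E eu; plia.
  by rewrite (oc_none_lo Hk E).
have mono2 : bI I k.+1 -> u \in I.
  rewrite /bI; case E: (oc k.+1) => [d|] // dI.
  by apply: (Iid _ _ _ dI); apply: (@oc_le k k.+1) eu E; plia.
rewrite /Tst /minC /maxI hmin hmax /eI /bI eu -/(bI I k.-1) -/(bI I k.+1).
move: mono1 mono2; case: (u \in I); case: (bI I k.-1); case: (bI I k.+1) => //= m1 m2;
  try (by have := m1 isT); try (by have := m2 isT); lia.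
Qed.


Lemma icard_c a b (cc : nat -> 'I_N) : (1 <= a <= b)%N -> (b <= A.-1)%N ->
  (forall h, (1 <= h <= A.-1)%N -> oc h = Some (cc h)) ->
  icard alpha (Some (cc a)) (Some (cc b)) = (b.+1 - a)%N.
Proof.
move=> Hab Hb occ.
rewrite /icard -sum1_card.
rewrite (eq_bigl (fun u => fle alpha (cc a) u && fle alpha u (cc b))); last first.
  by move=> u; rewrite inE.
rewrite (@sum_chain _ _ _ _ _ cc a b); first by rewrite sum_nat_const_nat muln1.
- move=> h hh; rewrite (@oc_le a h (cc a) (cc h)) ?occ //; try plia.
  by rewrite (@oc_le h b (cc h) (cc b)) ?occ //; plia.
- move=> u /andP[f1 f2].
  have oa : oc a = Some (cc a) by apply: occ; plia.
  have ob : oc b = Some (cc b) by apply: occ; plia.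
  have [h hh eh] := interval Hab Hb oa ob f1 f2.
  exists h => //; rewrite (occ h) in eh; first by case: eh.
  plia.
- move=> h h' hh hh' e; apply: (@oc_inj h h' (cc h)); rewrite ?occ ?e //; plia.
Qed.

Lemma main_sec (j : nat) (I : {set 'I_(fn alpha)}) :
  (1 <= j <= beta alpha i)%N ->
  is_ideal alpha I ->
  ((alph alpha i)%:Z * chi alpha (sel alpha i j) I
    - j%:Z * chi alpha (peakS alpha i) I
    - ((alph alpha i)%:Z - j%:Z) * chi alpha (valleyS alpha i) I
  = (if valleyS alpha i is None then (alph alpha i)%:Z - j%:Z else 0)
    - ((alph alpha i)%:Z - j%:Z) *
        (\sum_(u : 'I_(fn alpha) | ole alpha (sel alpha i 1) (Some u)
                                   && ole alpha (Some u) (sel alpha i j))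
            (icard alpha (sel alpha i 1) (Some u))%:Z * Tst alpha (Some u) I)
    - j%:Z *
        (\sum_(u : 'I_(fn alpha) | olt alpha (sel alpha i j) (Some u)
                                   && ole alpha (Some u) (sel alpha i (beta alpha i)))
            (icard alpha (Some u) (sel alpha i (beta alpha i)))%:Z * Tst alpha (Some u) I))%R.
Proof.
move=> Hj Iid.
have hb : beta alpha i = A.-1 by rewrite /beta subn1.
rewrite hb in Hj *.
have [c1 e1] : exists c, oc 1 = Some c by apply: ex_c; plia.
pose cc h := odflt c1 (oc h).
have occ h : (1 <= h <= A.-1)%N -> oc h = Some (cc h).
  by move=> Hh; have [u eu] := ex_c Hh; rewrite /cc eu.
rewrite (sel_eq Hj) (@sel_eq 1) ?(@sel_eq A.-1); try plia.
have oj : oc j = Some (cc j) by apply: occ; plia.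
have o1 : oc 1 = Some (cc 1%N) by apply: occ; plia.
have ob : oc A.-1 = Some (cc A.-1) by apply: occ; plia.
rewrite peak_eq valley_eq oj o1 ob.
rewrite (@sum_chain _ _ _ _ _ cc 1 j); first last.
- move=> h h' hh hh' e; apply: (@oc_inj h h' (cc h)); rewrite ?occ ?e //; plia.
- move=> u /andP[f1 f2].
  have Hab : (1 <= 1 <= j)%N by plia.
  have Hjb : (j <= A.-1)%N by plia.
  have [h hh eh] := interval Hab Hjb o1 oj f1 f2.
  exists h => //; rewrite (occ h) in eh; first by case: eh.
  plia.
- move=> h hh /=; rewrite (@oc_le 1 h (cc 1%N) (cc h)) ?occ //; try plia.
  by rewrite (@oc_le h j (cc h) (cc j)) ?occ //; plia.
rewrite (eq_big_nat _ _ (F2 := fun h => (h%:Z * (eI I h.-1 - 2 * eI I h + eI I h.+1))%R)); last first.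
  move=> h hh; rewrite icard_c ?(Tst_c Iid _ (occ h _)) ?subSS ?subn0 //; plia.
rewrite (S1 (eI I) j).
rewrite (@sum_chain _ _ _ _ _ cc j.+1 A.-1); first last.
- move=> h h' hh hh' e; apply: (@oc_inj h h' (cc h)); rewrite ?occ ?e //; plia.
- move=> u /andP[/andP[ne f1] f2].
  have Hab : (1 <= j <= A.-1)%N by plia.
  have Hjb : (A.-1 <= A.-1)%N by plia.
  have [h hh eh] := interval Hab Hjb oj ob f1 f2.
  have hj : h != j by apply: contra ne => /eqP e; rewrite e oj in eh; case: eh => ->.
  exists h; first by plia.
  rewrite (occ h) in eh; first by case: eh.
  plia.
- move=> h hh /=; rewrite /flt (@oc_le j h (cc j) (cc h)) ?occ //; try plia.
  rewrite (@oc_le h A.-1 (cc h) (cc A.-1)) ?occ //; try plia.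
  rewrite andbT andbT; apply/eqP => e.
  have : j = h by apply: (@oc_inj j h (cc j)); rewrite ?occ -?e //; plia.
  plia.
rewrite (eq_big_nat _ _ (F2 := fun h => ((A%:Z - h%:Z) * (eI I h.-1 - 2 * eI I h + eI I h.+1))%R)); last first.
  move=> h hh; have oh : oc h = Some (cc h) by apply: occ; plia.
  rewrite (icard_c _ _ occ); try plia.
  rewrite (Tst_c Iid _ oh); last by plia.
  have -> : ((A.-1).+1 - h)%N = (A - h)%N by plia.
  by rewrite -subzn //; plia.
have eA : (A.-1).+1 = (j.+1 + (A.-1 - j))%N by plia.
rewrite eA (S2 (eI I) A j (A.-1 - j)) -eA prednK; last by plia.
have -> : (j + (A.-1 - j))%N = A.-1 by plia.
rewrite prednK; last by plia.
have -> : chi alpha (Some (cc j)) I = eI I j by rewrite /eI /bI oj.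
have -> : chi alpha (oc A) I = eI I A.
  rewrite /eI /bI; case: (oc A) => //; have -> : (A == 0%N) = false by apply/negbTE; plia.
  by [].
case E0: (oc 0) => [v|].
- have -> : eI I 0 = chi alpha (Some v) I by rewrite /eI /bI E0.
  ring.
- have -> : eI I 0 = 1 by rewrite /eI /bI E0.
  rewrite /chi; ring.
Qed.

End S.

Local Open Scope ring_scope.

Theorem theorem4p1 (alpha : seq nat) (i j : nat) (I : {set 'I_(fn alpha)}) :
  (2 <= size alpha)%N ->
  all (fun a => 0 < a)%N alpha ->
  (2 <= alph alpha 1)%N -> (2 <= alph alpha (size alpha))%N ->
  (1 <= i <= size alpha)%N -> (2 <= alph alpha i)%N ->
  (1 <= j <= beta alpha i)%N ->
  is_ideal alpha I ->
  (alph alpha i)%:Z * chi alpha (sel alpha i j) I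
    - j%:Z * chi alpha (peakS alpha i) I
    - ((alph alpha i)%:Z - j%:Z) * chi alpha (valleyS alpha i) I
  = (if valleyS alpha i is None then (alph alpha i)%:Z - j%:Z else 0)
    - ((alph alpha i)%:Z - j%:Z) *
        (\sum_(u : 'I_(fn alpha) | ole alpha (sel alpha i 1) (Some u)
                                   && ole alpha (Some u) (sel alpha i j))
            (icard alpha (sel alpha i 1) (Some u))%:Z * Tst alpha (Some u) I)
    - j%:Z *
        (\sum_(u : 'I_(fn alpha) | olt alpha (sel alpha i j) (Some u)
                                   && ole alpha (Some u) (sel alpha i (beta alpha i)))
            (icard alpha (Some u) (sel alpha i (beta alpha i)))%:Z * Tst alpha (Some u) I).
Proof.
move=> Ht Hpos Ha1 Hat Hi Hai Hj Iid.
exact: (main_sec Ht Hpos Ha1 Hat Hi Hai Hj Iid).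
Qed.
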